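(* In the setting described in the context, with the Poisson tensors $\pi_s$, $s=0,\dots,\alpha$, and the notation $h^{(k)}_j:=c^{(k)}_{1-j}$ for $j=0,-1,\dots,-\alpha+1$, for each $k\in\{1,\dots,m\}$ and each pair $0\le i<j\le\alpha$ one has the bi-Hamiltonian chain $$\pi_i\,dh^{(k)}_{-i}=0,\qquad \pi_i\,dh^{(k)}_{-i+r}=X^{(k)}_r=\pi_j\,dh^{(k)}_{-j+r}\ \ (r=1,\dots,n_k),\qquad \pi_j\,dh^{(k)}_{-j+n_k+1}=0.$$ In particular, for each $k$ there are $\binom{\alpha+1}{2}$ such bi-Hamiltonian chains.
   Context: Let $n,m\ge1$, $n_1,\dots,n_m\ge1$ integers with $n_1+\dots+n_m=n$, and $\alpha$ an integer with $1\le\alpha\le\min_k n_k$; set $N=\alpha m$. Let $\varphi_0,\varphi_1,\dots,\varphi_m$ be smooth functions of $(\lambda,\mu)$ with $\varphi_m\equiv1$. Consider the curve $$\varphi_0(\lambda,\mu)+\sum_{k=1}^m\varphi_k(\lambda,\mu)\,\psi_k(\lambda)=0,\qquad \psi_k(\lambda)=c^{(k)}_\alpha\lambda^{n_k-1+\alpha}+\dots+c^{(k)}_1\lambda^{n_k}+\sum_{i=1}^{n_k}a^{(k)}_i\lambda^{n_k-i}.$$ Taking $n$ copies with $(\lambda,\mu)$ replaced by $(\lambda_j,\mu_j)$, $j=1,\dots,n$, and solving (assumed possible on an open domain, with nondegenerate Jacobian) for the $a^{(k)}_i$ gives $a^{(k)}_i=h^{(k)}_i(\boldsymbol\lambda,\boldsymbol\mu,\mathbf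 c)$ on an open set $\mathcal M\subset\mathbb{R}^{2n+N}$ with coordinates $(\boldsymbol\lambda,\boldsymbol\mu,\mathbf c)$, $\mathbf c=(c^{(k)}_j)_{k\le m,\,j\le\alpha}$. Set $\pi_0=\sum_{i=1}^n\partial_{\lambda_i}\wedge\partial_{\mu_i}$, $X^{(k)}_i=\pi_0\,dh^{(k)}_i$, and for $s=0,\dots,\alpha$ $$\pi_s=\sum_{i=1}^n\lambda_i^s\frac{\partial}{\partial\lambda_i}\wedge\frac{\partial}{\partial\mu_i}+\sum_{k=1}^m\sum_{j=1}^s X^{(k)}_j\wedge\frac{\partial}{\partial c^{(k)}_{s-j+1}}.$$ *)

(* Defs.v *)
From HB Require Import structures.
From mathcomp Require Import all_boot all_order all_algebra.
From mathcomp Require Import all_classical all_reals all_analysis.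
Set Implicit Arguments. Unset Strict Implicit. Unset Printing Implicit Defensive.
Import Order.TTheory GRing.Theory Num.Theory.
Import numFieldNormedType.Exports.
Local Open Scope ring_scope.
Local Open Scope classical_set_scope.

Fixpoint Ck_on {R : realType} {V : normedModType R} (U : set V) (k : nat)
    (f : V -> R) : Prop :=
  match k with
  | 0%N => forall x, U x -> {for x, continuous f}
  | k'.+1 => (forall x, U x -> differentiable f x) /\
             forall v : V, Ck_on U k' (fun x => 'D_v f x)
  end.

Definition smooth_on {R : realType} {V : normedModType R} (U : set V)
  (f : V -> R) : Prop := forall k, Ck_on U k f.

Section Defs.
Variable R : realType.
Variables n m alpha : nat.
(* points of R^{2n+N}, N = alpha*m; coordinates indexed by nat:
   lambda_i (i<n) at i, mu_i at n+i,
   c^{(k)}_l (k : 'I_m 0-based, 1<=l<=alpha) at 2n + k*alpha + (l-1) *)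
Local Notation D := (n + n + m * alpha)%N.
Local Notation pt := 'rV[R]_D.

Definition ev (x : nat) : pt := \row_(e < D) (if val e == x then 1 else 0).
Definition crd (x : nat) (p : pt) : R := \sum_(e < D | val e == x) p 0 e.
Definition mu_idx (i : nat) : nat := (n + i)%N.
Definition c_idx (k : 'I_m) (l : nat) : nat := (n + n + k * alpha + l.-1)%N.

Definition pd (f : pt -> R) (x : nat) (p : pt) : R := 'D_(ev x) f p.
Definition dfv (f : pt -> R) (p : pt) (v : pt) : R :=
  \sum_(e < D) v 0 e * pd f e p.

(* Contraction convention: (A /\ B) df := df(B) A - df(A) B. *)
Definition pi0 (f : pt -> R) (p : pt) : pt :=
  \sum_(i < n) (pd f (mu_idx i) p *: ev i - pd f i p *: ev (mu_idx i)).

Definition Xf (h : 'I_m -> nat -> pt -> R) (k : 'I_m) (r : nat) (p : pt) : pt :=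
  pi0 (h k r) p.

Definition pis (h : 'I_m -> nat -> pt -> R) (s : nat) (f : pt -> R) (p : pt)
  : pt :=
  \sum_(i < n) (crd i p ^+ s) *: (pd f (mu_idx i) p *: ev i
                                   - pd f i p *: ev (mu_idx i))
  + \sum_(k < m) \sum_(1 <= j < s.+1)
      (pd f (c_idx k (s - j + 1)) p *: Xf h k j p
       - dfv f p (Xf h k j p) *: ev (c_idx k (s - j + 1))).

(* h^{(k)}_j for integer j: h^{(k)}_j (j >= 1) are the solved functions,
   h^{(k)}_j := c^{(k)}_{1-j} for j <= 0 (meaningful for j >= -alpha+1) *)
Definition Hk (h : 'I_m -> nat -> pt -> R) (k : 'I_m) (j : int) : pt -> R :=
  match j with
  | Posz (S r) => h k r.+1
  | Posz 0 => crd (c_idx k 1)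
  | Negz t => crd (c_idx k t.+2)
  end.

Definition psi (nk : nat) (c a : nat -> R) (x : R) : R :=
  \sum_(1 <= l < alpha.+1) c l * x ^+ (nk.-1 + l)
  + \sum_(1 <= i < nk.+1) a i * x ^+ (nk - i).

(* the j-th copy of the curve equation at p, with a^{(k)}_i = h k i p *)
Definition curve_eq (nk : 'I_m -> nat) (phi0 : R * R -> R)
  (phi : 'I_m -> R * R -> R) (h : 'I_m -> nat -> pt -> R) (p : pt) (j : nat)
  : Prop :=
  phi0 (crd j p, crd (mu_idx j) p)
  + \sum_(k < m) phi k (crd j p, crd (mu_idx j) p)
       * psi (nk k) (fun l => crd (c_idx k l) p) (fun i => h k i p) (crd j p)
  = 0.

(* nondegeneracy of the (linear) system in the a's at p: the n x n Jacobian
   w.r.t. (a^{(k)}_i) has trivial kernel *)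
Definition nondeg_system (nk : 'I_m -> nat) (phi : 'I_m -> R * R -> R)
  (p : pt) : Prop :=
  forall a : 'I_m -> nat -> R,
    (forall j, (j < n)%N ->
       \sum_(k < m) phi k (crd j p, crd (mu_idx j) p)
         * \sum_(1 <= i < (nk k).+1) a k i * crd j p ^+ (nk k - i) = 0) ->
    forall k i, (1 <= i <= nk k)%N -> a k i = 0.

End Defs.

(* Main.v *)
Require Import Defs.
From HB Require Import structures.
From mathcomp Require Import all_boot all_order all_algebra.
From mathcomp Require Import all_classical all_reals all_analysis.
From mathcomp Require Import zify ring.
Set Implicit Arguments. Unset Strict Implicit. Unset Printing Implicit Defensive.
Import Order.TTheory GRing.Theory Num.Theory.
Import numFieldNormedType.Exports.
Local Open Scope ring_scope.
Local Open Scope classical_set_scope.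

Section Gen.
Variable R : realType.
Implicit Types (f g : R -> R) (x : R).

Lemma dD f g x : derivable f x 1 -> derivable g x 1 ->
  derivable (fun t => f t + g t) x 1.
Proof. move=> a b; exact: derivableD a b. Qed.

Lemma dM f g x : derivable f x 1 -> derivable g x 1 ->
  derivable (fun t => f t * g t) x 1.
Proof. move=> a b; exact: derivableM a b. Qed.

Lemma dC (c x : R) : derivable (fun _ : R => c) x 1.
Proof. exact: derivable_cst. Qed.

Lemma dId x : derivable (fun t : R => t) x 1.
Proof. exact: derivable_id. Qed.

Lemma dV f x : f x != 0 -> derivable f x 1 -> derivable (fun t => (f t)^-1) x 1.
Proof. move=> a b; exact: derivableV. Qed.

Lemma dX f x k : derivable f x 1 -> derivable (fun t => f t ^+ k) x 1.
Proof.
move=> df; elim: k => [|k IH]; first by under eq_fun do rewrite expr0; exact: dC.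
under eq_fun do rewrite exprS; exact: dM.
Qed.

Lemma dsum (I : Type) (r : seq I) (P : pred I) (F : I -> R -> R) x :
  (forall i, P i -> derivable (F i) x 1) ->
  derivable (fun t => \sum_(i <- r | P i) F i t) x 1.
Proof.
move=> H; elim: r => [|i r IH].
  under eq_fun do rewrite big_nil; exact: dC.
under eq_fun do rewrite big_cons.
case Pi: (P i); last exact: IH.
exact: dD (H _ Pi) IH.
Qed.

Lemma dprod (I : Type) (r : seq I) (P : pred I) (F : I -> R -> R) x :
  (forall i, P i -> derivable (F i) x 1) ->
  derivable (fun t => \prod_(i <- r | P i) F i t) x 1.
Proof.
move=> H; elim: r => [|i r IH].
  under eq_fun do rewrite big_nil; exact: dC.
under eq_fun do rewrite big_cons.
case Pi: (P i); last exact: IH.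
exact: dM (H _ Pi) IH.
Qed.

Lemma ddet N (A : R -> 'M[R]_N) x :
  (forall a c, derivable (fun t => A t a c) x 1) ->
  derivable (fun t => \det (A t)) x 1.
Proof.
move=> H; rewrite /determinant; apply: dsum => s _.
apply: dM; first exact: dC.
by apply: dprod => i _; exact: H.
Qed.

Lemma dcont f x : derivable f x 1 -> {for x, continuous f}.
Proof. by move=> /derivable1_diffP /differentiable_continuous. Qed.

Lemma GL N (A : R -> 'M[R]_N) (b g : R -> 'I_N -> R) :
  (forall a c, derivable (fun t => A t a c) 0 1) ->
  (forall a, derivable (fun t => b t a) 0 1) ->
  \det (A 0) != 0 ->
  (\forall t \near 0, forall a, \sum_c A t a c * g t c = b t a) ->
  forall c, derivable (fun t => g t c) 0 1.
Proof.
move=> dA db d0 Heq c.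
have dd := ddet dA.
have cd := dcont dd.
have nz : \forall t \near 0, \det (A t) != 0.
  have : (fun t => \det (A t)) @ 0 --> \det (A 0) by exact: cd.
  move=> /(_ [set y | y != 0]); apply.
  by apply: open_nbhs_nbhs; split; [exact: open_neq | ].
pose r t := (\det (A t))^-1 * \sum_a (\adj (A t)) c a * b t a.
apply: (@near_eq_derivable _ _ _ r).
  near=> t.
  rewrite /r.
  have E : \sum_a (\adj (A t)) c a * b t a = \det (A t) * g t c.
    have Ht : forall a, \sum_c0 A t a c0 * g t c0 = b t a by near: t.
    under eq_bigr do rewrite -Ht mulr_sumr.
    rewrite exchange_big /=.
    transitivity (\sum_d ((\adj (A t)) *m A t) c d * g t d).
      by apply: eq_bigr => d _; rewrite !mxE mulr_suml; apply: eq_bigr => a _; rewrite mulrA.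
    rewrite mul_adj_mx (bigD1 c) //= big1 ?addr0; first by rewrite !mxE eqxx mulr1n.
    by move=> d /negPf dc; rewrite !mxE eq_sym dc mulr0n mul0r.
  rewrite E mulrA mulVf ?mul1r //.
  by near: t.
apply: dM; first exact: dV (dd).
apply: dsum => a _; apply: dM; last exact: db.
rewrite /=; under eq_fun do rewrite mxE /cofactor.
apply: dM; first exact: dC.
apply: ddet => i j; under eq_fun do rewrite !mxE; exact: dA.
Unshelve. all: by end_near.
Qed.

Lemma dsumn a b (F : nat -> R -> R) x :
  (forall i, (a <= i < b)%N -> derivable (F i) x 1) ->
  derivable (fun t => \sum_(a <= i < b) F i t) x 1.
Proof.
move=> H; under eq_fun do rewrite big_nat_cond.
apply: dsum => i /andP[Hi _]; exact: H.
Qed.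

Lemma DD (f g : R -> R) x : derivable f x 1 -> derivable g x 1 ->
  'D_1 (fun t => f t + g t) x = 'D_1 f x + 'D_1 g x.
Proof. move=> a b; exact: deriveD a b. Qed.

Lemma Dsum (I : Type) (r : seq I) (P : pred I) (F : I -> R -> R) x :
  (forall i, P i -> derivable (F i) x 1) ->
  'D_1 (fun t => \sum_(i <- r | P i) F i t) x = \sum_(i <- r | P i) 'D_1 (F i) x.
Proof.
move=> H; elim: r => [|i r IH].
  under eq_fun do rewrite big_nil; rewrite big_nil; exact: derive_cst.
under eq_fun do rewrite big_cons; rewrite big_cons.
case Pi: (P i); last exact: IH.
rewrite -IH.
by apply: DD; [exact: H|exact: dsum].
Qed.

Lemma Dsumn a b (F : nat -> R -> R) x :
  (forall i, (a <= i < b)%N -> derivable (F i) x 1) ->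
  'D_1 (fun t => \sum_(a <= i < b) F i t) x = \sum_(a <= i < b) 'D_1 (F i) x.
Proof.
move=> H; under eq_fun do rewrite big_nat_cond; rewrite big_nat_cond.
apply: Dsum => i /andP[Hi _]; exact: H.
Qed.

Lemma DMl (c : R) (f : R -> R) x : derivable f x 1 ->
  'D_1 (fun t => c * f t) x = c * 'D_1 f x.
Proof. move=> d; exact: deriveMl d. Qed.

Lemma DMr (c : R) (f : R -> R) x : derivable f x 1 ->
  'D_1 (fun t => f t * c) x = 'D_1 f x * c.
Proof. move=> d; rewrite mulrC; exact: deriveMr d. Qed.

Lemma DDc (c : R) (f : R -> R) x : derivable f x 1 ->
  'D_1 (fun t => c + f t) x = 'D_1 f x.
Proof.
move=> d; rewrite (deriveD (@dC c x) d).
by rewrite (@derive_cst _ _ _ c x 1) add0r.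
Qed.

Lemma shiftA (w : nat -> R) (lam : R) (N s : nat) : (s <= N)%N -> (0 < N)%N ->
  \sum_(1 <= t < N.+1) (if (t + s <= N)%N then w (t + s) else 0) * lam ^+ (N - t)
  = lam ^+ s * \sum_(1 <= t < N.+1) w t * lam ^+ (N - t)
    - \sum_(1 <= r < s.+1) w r * lam ^+ (N.-1 + (s - r + 1)).
Proof.
move=> sN N0.
rewrite mulr_sumr [in RHS](@big_cat_nat _ _ _ s.+1) /=; [|lia|lia].
have -> : \sum_(1 <= i < s.+1) lam ^+ s * (w i * lam ^+ (N - i))
   = \sum_(1 <= r < s.+1) w r * lam ^+ (N.-1 + (s - r + 1)).
  apply: eq_big_nat => r Hr; rewrite mulrCA -exprD; congr (_ * lam ^+ _); lia.
rewrite [X in X - _]addrC addrK.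
rewrite [in LHS](@big_cat_nat _ _ _ (N - s).+1) /=; [|lia|lia].
rewrite [X in _ + X = _]big_nat_cond [X in _ + X = _]big1 ?addr0; last first.
  move=> t /andP[/andP[h1 h2] _]; rewrite ifF ?mul0r //; apply/negbTE; lia.
have E1 : \sum_(s.+1 <= t < N.+1) lam ^+ s * (w t * lam ^+ (N - t))
  = \sum_(0 <= i < N.+1 - s.+1) lam ^+ s * (w (i + s.+1) * lam ^+ (N - (i + s.+1)))
  := big_addn 0 N.+1 s.+1 (fun _ => true) (fun t => lam ^+ s * (w t * lam ^+ (N - t))).
have E2 : \sum_(1 <= t < (N - s).+1) (if (t + s <= N)%N then w (t + s) else 0) * lam ^+ (N - t)
  = \sum_(0 <= i < (N - s).+1 - 1) (if (i + 1 + s <= N)%N then w (i + 1 + s) else 0) * lam ^+ (N - (i + 1))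
  := big_addn 0 (N - s).+1 1 (fun _ => true) (fun t => (if (t + s <= N)%N then w (t + s) else 0) * lam ^+ (N - t)).
rewrite E1 E2 ?subSS ?subn1 ?subn0 /=.
apply: eq_big_nat => i Hi.
rewrite ifT; last lia.
rewrite mulrCA -exprD; congr (w _ * lam ^+ _); lia.
Qed.

End Gen.

Section Main.
Variable R : realType.
Variables n m alpha : nat.
Local Notation D := (n + n + m * alpha)%N.
Local Notation pt := 'rV[R]_D.
Local Notation crd := (@crd R n m alpha).
Local Notation ev := (@ev R n m alpha).
Local Notation pd := (@pd R n m alpha).
Local Notation cI := (@c_idx n m alpha).
Local Notation muI := (mu_idx n).

Lemma crdD y (u w : pt) : crd y (u + w) = crd y u + crd y w.
Proof. by rewrite /Defs.crd -big_split; apply: eq_bigr => e _; rewrite mxE. Qed.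

Lemma crdZ y a (u : pt) : crd y (a *: u) = a * crd y u.
Proof. by rewrite /Defs.crd mulr_sumr; apply: eq_bigr => e _; rewrite mxE. Qed.

Lemma crd_line y t (v p : pt) : crd y (t *: v + p) = t * crd y v + crd y p.
Proof. by rewrite crdD crdZ. Qed.

Lemma crd_ev y x : crd y (ev x) = ((x == y) && (y < D)%N)%:R.
Proof.
rewrite /Defs.crd.
case: (ltnP y D) => yD.
  rewrite (big_pred1 (Ordinal yD)); last by move=> e /=; apply/eqP/eqP => [E|->//]; apply: val_inj.
  by rewrite mxE /= eq_sym andbT; case: eqP.
rewrite big_pred0 ?andbF // => e; apply/negbTE; apply/eqP => ey.
by move: (ltn_ord e); rewrite ey ltnNge yD.
Qed.

Lemma derive_line (V : normedModType R) (f : V -> R) (p v : V) :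
  'D_v f p = 'D_1 (fun t : R => f (t *: v + p)) 0.
Proof.
rewrite /derive; set g1 := fun h => h^-1 *: _; set g2 := fun h => h^-1 *: _.
suff -> : g1 = g2 by [].
by rewrite funeqE /g1 /g2 => t /=; rewrite addr0 scale0r add0r [_%:A]mulr1.
Qed.

Lemma derive_aff (a b x : R) : 'D_1 (fun t : R => t * a + b) x = a.
Proof.
have h1 : derivable (fun t : R => t * a) x 1 by apply: dM; [exact: dId|exact: dC].
have h2 : derivable (fun _ : R => b) x 1 by exact: dC.
have -> : 'D_1 (fun t : R => t * a + b) x = 'D_1 (fun t : R => t * a) x + 'D_1 (fun _ : R => b) x.
  exact: (deriveD h1 h2).
have -> : 'D_1 (fun _ : R => b) x = 0 by exact: derive_cst.
have -> : 'D_1 (fun t : R => t * a) x = x *: 'D_1 (fun _ : R => a) x + a *: 'D_1 (fun t : R => t) x.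
  exact: (deriveM (@dId R x) (@dC R a x)).
have -> : 'D_1 (fun _ : R => a) x = 0 by exact: derive_cst.
have -> : 'D_1 (fun t : R => t) x = 1 by exact: derive_id.
by rewrite scaler0 add0r addr0 /GRing.scale /= mulr1.
Qed.

Lemma pd_crd y x (p : pt) : pd (crd y) x p = crd y (ev x).
Proof.
rewrite /Defs.pd derive_line.
under eq_fun do rewrite crd_line.
exact: derive_aff.
Qed.


Variable nk : 'I_m -> nat.
Definition II := {k : 'I_m & 'I_(nk k)}.
Local Notation N := #|{: II}|.
Definition kk (c : 'I_N) : 'I_m := tag (enum_val c).
Definition rr (c : 'I_N) : nat := (tagged (enum_val c)).+1.

Lemma cardII : N = (\sum_(k < m) nk k)%N.
Proof.
rewrite card_tagged sumnE big_map big_enum /=.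
by apply: eq_bigr => k _; rewrite card_ord.
Qed.

Lemma sumI (G : 'I_m -> nat -> R) :
  \sum_(k < m) \sum_(1 <= i < (nk k).+1) G k i = \sum_(c < N) G (kk c) (rr c).
Proof.
transitivity (\sum_(k < m) \sum_(r : 'I_(nk k)) G k r.+1).
  by apply: eq_bigr => k _; rewrite big_add1 /= big_mkord.
rewrite (sig_big_dep xpredT (fun _ => xpredT) (fun k (r : 'I_(nk k)) => G k r.+1)) /=.
rewrite (reindex (@enum_val II (pred_of_simpl predT))) /=; last first.
  by exists (@enum_rank II) => x _; [exact: enum_valK | exact: enum_rankK].
by [].
Qed.

Lemma kkrr_inj (c c' : 'I_N) : kk c = kk c' -> rr c = rr c' -> c = c'.
Proof.
rewrite /kk /rr => Hk Hr.
apply: enum_val_inj.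
move: Hk Hr; case: (enum_val c) => k r; case: (enum_val c') => k' r' /= Hk.
subst k' => [[Hr]]; congr Tagged; exact: val_inj.
Qed.

Lemma rr_range c : (1 <= rr c <= nk (kk c))%N.
Proof. by rewrite /rr /kk /=; case: (enum_val c) => k r /=. Qed.

Lemma kkrr_surj k r : (1 <= r <= nk k)%N -> exists c, kk c = k /\ rr c = r.
Proof.
case/andP => r1 rn.
have rlt : (r.-1 < nk k)%N by rewrite prednK.
exists (enum_rank (Tagged (fun k => 'I_(nk k)) (Ordinal rlt))).
by rewrite /kk /rr enum_rankK /= prednK.
Qed.

Variable phi : 'I_m -> R * R -> R.

Definition Aop (q : pt) (a : 'I_m -> nat -> R) (j : nat) : R :=
  \sum_(k < m) phi k (crd j q, crd (muI j) q)
     * \sum_(1 <= i < (nk k).+1) a k i * crd j q ^+ (nk k - i).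

Definition Amat (q : pt) : 'M[R]_N :=
  \matrix_(a, c) (phi (kk c) (crd a q, crd (muI a) q)
                   * crd a q ^+ (nk (kk c) - rr c)).

Lemma Aop_mat q a (j : 'I_N) :
  Aop q a j = \sum_c Amat q j c * a (kk c) (rr c).
Proof.
rewrite /Aop.
under eq_bigr do rewrite mulr_sumr.
rewrite (sumI (fun k i => phi k (crd j q, crd (muI j) q) * (a k i * crd j q ^+ (nk k - i)))).
apply: eq_bigr => c _; rewrite mxE.
by rewrite [a _ _ * _]mulrC mulrA.
Qed.

Hypothesis Hsum : (\sum_(k < m) nk k)%N = n.

Lemma NE : N = n. Proof. by rewrite cardII Hsum. Qed.

Lemma det_nz q : @nondeg_system R n m alpha nk phi q -> \det (Amat q) != 0.
Proof.
move=> nd; apply/negP => /eqP d0.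
have : \det (Amat q)^T == 0 by rewrite det_tr d0.
case/det0P => v vnz vA.
pose a k i := \sum_(c | (kk c == k) && (rr c == i)) v 0 c.
have av : forall c, a (kk c) (rr c) = v 0 c.
  move=> c; rewrite /a (big_pred1 c) // => c' /=.
  apply/andP/eqP => [[/eqP E1 /eqP E2]|->//]; exact: kkrr_inj.
have Z : forall j, (j < n)%N -> Aop q a j = 0.
  move=> j jn; have jN : (j < N)%N by rewrite NE.
  have -> : j = val (Ordinal jN) by [].
  rewrite Aop_mat.
  have := congr1 (fun M : 'M[R]_(1, N) => M 0 (Ordinal jN)) vA; rewrite !mxE => E; apply: (eq_trans _ E).
  by apply: eq_bigr => c _; rewrite av !mxE mulrC.
have := nd a Z => H0.
move/eqP: vnz; apply; apply/rowP => c; rewrite mxE -av.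
by apply: H0; exact: rr_range.
Qed.


Variable phi0 : R * R -> R.
Variable h : 'I_m -> nat -> pt -> R.
Variable M : set pt.
Variable U : set (R * R).
Hypothesis HphiD : forall k x, U x -> differentiable (phi k) x.
Hypothesis Hphi0D : forall x, U x -> differentiable phi0 x.
Hypothesis HU : forall p, M p -> forall j, (j < n)%N -> U (crd j p, crd (muI j) p).
Hypothesis Hcurve : forall p, M p -> forall j, (j < n)%N ->
  @curve_eq R n m alpha nk phi0 phi h p j.
Hypothesis Hnd : forall p, M p -> @nondeg_system R n m alpha nk phi p.
Hypothesis HM : open M.

Lemma near_M p v : M p -> \forall t \near 0, M (t *: v + p).
Proof.
move=> Mp.
have H : (fun t : R => t *: v + p) @ 0 --> 0 *: v + p.
  by apply: cvgD; [exact: scalel_continuous | exact: cvg_cst].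
rewrite scale0r add0r in H.
by apply: H; apply: open_nbhs_nbhs; split.
Qed.

Lemma dcrd y (v p : pt) (x : R) : derivable (fun t : R => crd y (t *: v + p)) x 1.
Proof.
under eq_fun do rewrite crd_line.
by apply: dD; [apply: dM; [exact: dId|exact: dC]|exact: dC].
Qed.

Lemma dN (f : R -> R) (x : R) : derivable f x 1 -> derivable (fun t => - f t) x 1.
Proof. move=> a; exact: derivableN a. Qed.

Lemma dfun2 (f : R * R -> R) y1 y2 (v p : pt) :
  differentiable f (crd y1 p, crd y2 p) ->
  derivable (fun t : R => f (crd y1 (t *: v + p), crd y2 (t *: v + p))) 0 1.
Proof.
move=> Hd.
have := @diff_derivable _ _ _ f _ (crd y1 v, crd y2 v) Hd.
move/derivable1P.
have -> : (fun h0 : R => f (h0 *: (crd y1 v, crd y2 v) + (crd y1 p, crd y2 p)))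
   = (fun t : R => f (crd y1 (t *: v + p), crd y2 (t *: v + p))).
  by apply: funext => t; rewrite !crd_line.
by [].
Qed.

Definition cpart (q : pt) (j : nat) : R :=
  \sum_(k < m) phi k (crd j q, crd (muI j) q)
     * \sum_(1 <= l < alpha.+1) crd (cI k l) q * crd j q ^+ ((nk k).-1 + l).

Lemma rowEq q j : @curve_eq R n m alpha nk phi0 phi h q j ->
  Aop q (fun k i => h k i q) j = - (phi0 (crd j q, crd (muI j) q) + cpart q j).
Proof.
rewrite /curve_eq /psi /Aop /cpart.
under eq_bigr do rewrite mulrDr.
rewrite big_split /= addrA => E.
by apply/eqP; rewrite -addr_eq0 addrC E.
Qed.

Lemma hder p v k r : M p -> (1 <= r <= nk k)%N -> derivable (h k r) p v.
Proof.
move=> Mp rr1; apply/derivable1P.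
have [c [Hk Hr]] := kkrr_surj rr1.
have ltn_n : forall a : 'I_N, (a < n)%N by move=> a; rewrite -NE.
have := @GL R N (fun t => Amat (t *: v + p))
  (fun t a => - (phi0 (crd a (t *: v + p), crd (muI a) (t *: v + p)) + cpart (t *: v + p) a))
  (fun t c => h (kk c) (rr c) (t *: v + p)) _ _ _ _ c.
rewrite Hk Hr; apply.
- move=> a c'; rewrite /Amat; under eq_fun do rewrite mxE.
  apply: dM; last exact/dX/dcrd.
  by apply: dfun2; apply: HphiD; apply: HU.
- move=> a; apply: dN; apply: dD.
    by apply: dfun2; apply: Hphi0D; apply: HU.
  rewrite /cpart; apply: dsum => k' _; apply: dM.
    by apply: dfun2; apply: HphiD; apply: HU.
  by apply: dsum => l _; apply: dM; [exact: dcrd|exact/dX/dcrd].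
- by rewrite scale0r add0r; apply: det_nz; apply: Hnd.
- have := near_M v Mp; apply: filterS => t Mt a.
  have := Aop_mat (t *: v + p) (fun k i => h k i (t *: v + p)) a => /= <-.
  by apply: rowEq; apply: Hcurve => //; exact: ltn_n.
Qed.


Lemma dh p v k i : M p -> (1 <= i <= nk k)%N ->
  derivable (fun t : R => h k i (t *: v + p)) 0 1.
Proof. by move=> Mp Hi; have := @hder p v k i Mp Hi; move/derivable1P. Qed.

Lemma Dh p v k i : 'D_v (h k i) p = 'D_1 (fun t : R => h k i (t *: v + p)) 0.
Proof. exact: derive_line. Qed.

Lemma eqder p v j : M p -> (j < n)%N -> crd j v = 0 -> crd (muI j) v = 0 ->
  \sum_(k < m) phi k (crd j p, crd (muI j) p)
     * \sum_(1 <= l < alpha.+1) crd (cI k l) v * crd j p ^+ ((nk k).-1 + l)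
  + Aop p (fun k i => 'D_v (h k i) p) j = 0.
Proof.
move=> Mp jn hj hmu.
have F0 : 'D_1 (fun t : R => phi0 (crd j (t *: v + p), crd (muI j) (t *: v + p))
     + cpart (t *: v + p) j + Aop (t *: v + p) (fun k i => h k i (t *: v + p)) j) 0 = 0.
  rewrite (@near_eq_derive _ _ _ _ (fun _ => 0)); first exact: derive_cst.
  have := near_M v Mp; apply: filterS => t Mt.
  by rewrite (rowEq (Hcurve Mt jn)) subrr.
have Lj : forall t : R, crd j (t *: v + p) = crd j p.
  by move=> t; rewrite crd_line hj mulr0 add0r.
have Lmu : forall t : R, crd (muI j) (t *: v + p) = crd (muI j) p.
  by move=> t; rewrite crd_line hmu mulr0 add0r.
have Fe : (fun t : R => phi0 (crd j (t *: v + p), crd (muI j) (t *: v + p))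
     + cpart (t *: v + p) j + Aop (t *: v + p) (fun k i => h k i (t *: v + p)) j)
  = (fun t : R => phi0 (crd j p, crd (muI j) p) +
      \sum_(k < m) (phi k (crd j p, crd (muI j) p) *
        (\sum_(1 <= l < alpha.+1) crd (cI k l) (t *: v + p) * crd j p ^+ ((nk k).-1 + l)
         + \sum_(1 <= i < (nk k).+1) h k i (t *: v + p) * crd j p ^+ (nk k - i)))).
  apply: funext => t; rewrite /cpart /Aop !Lj !Lmu -addrA -big_split /=.
  by congr (_ + _); apply: eq_bigr => k _; rewrite mulrDr.
rewrite Fe in F0.
have dC1 : forall k l, derivable (fun t : R => crd (cI k l) (t *: v + p) * crd j p ^+ ((nk k).-1 + l)) 0 1.
  by move=> k l; apply: dM; [exact: dcrd|exact: dC].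
have dH1 : forall k l, (1 <= l < (nk k).+1)%N ->
   derivable (fun t : R => h k l (t *: v + p) * crd j p ^+ (nk k - l)) 0 1.
  by move=> k l Hl; apply: dM; [exact: (@dh p v k l Mp Hl)|exact: dC].
have dK : forall k : 'I_m, derivable (fun t : R =>
      \sum_(1 <= l < alpha.+1) crd (cI k l) (t *: v + p) * crd j p ^+ ((nk k).-1 + l)
       + \sum_(1 <= i < (nk k).+1) h k i (t *: v + p) * crd j p ^+ (nk k - i)) 0 1.
  move=> k; apply: dD; apply: dsumn => l Hl; [exact: dC1 | exact: dH1].
have dK2 : forall k : 'I_m, derivable (fun t : R => phi k (crd j p, crd (muI j) p) * (
      \sum_(1 <= l < alpha.+1) crd (cI k l) (t *: v + p) * crd j p ^+ ((nk k).-1 + l)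
       + \sum_(1 <= i < (nk k).+1) h k i (t *: v + p) * crd j p ^+ (nk k - i))) 0 1.
  by move=> k; apply: dM; [exact: dC|exact: dK].
rewrite -[RHS]F0 DDc; last by apply: dsum => k _; exact: dK2.
rewrite Dsum; last by move=> k _; exact: dK2.
rewrite /Aop -big_split /=; apply: eq_bigr => k _.
rewrite DMl; last exact: dK.
rewrite DD; first last.
- by apply: dsumn => l Hl; exact: dH1.
- by apply: dsumn => l Hl; exact: dC1.
rewrite -mulrDr Dsumn; last by move=> l Hl; exact: dC1.
rewrite Dsumn; last by move=> l Hl; exact: dH1.
congr (_ * (_ + _)); apply: eq_big_nat => l Hl.
  rewrite DMr; last exact: dcrd.
  by under eq_fun do rewrite crd_line; rewrite derive_aff.
by rewrite DMr ?Dh //; exact: (@dh p v k l Mp Hl).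
Qed.


Lemma AopB q a b j : Aop q (fun k i => a k i - b k i) j = Aop q a j - Aop q b j.
Proof.
rewrite /Aop -sumrB; apply: eq_bigr => k _; rewrite -mulrBr -sumrB.
by congr (_ * _); apply: eq_bigr => i _; rewrite mulrBl.
Qed.

Lemma AopZ q c a j : Aop q (fun k i => c * a k i) j = c * Aop q a j.
Proof.
rewrite /Aop mulr_sumr; apply: eq_bigr => k _; rewrite mulrCA.
by congr (_ * _); rewrite mulr_sumr; apply: eq_bigr => i _; rewrite mulrA.
Qed.

Lemma AopS q (T : Type) (r : seq T) (P : pred T) (F : T -> 'I_m -> nat -> R) j :
  Aop q (fun k i => \sum_(x <- r | P x) F x k i) j = \sum_(x <- r | P x) Aop q (F x) j.
Proof.
rewrite /Aop.
transitivity (\sum_(k < m) \sum_(x <- r | P x) phi k (crd j q, crd (muI j) q) *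
   \sum_(1 <= i < (nk k).+1) F x k i * crd j q ^+ (nk k - i)).
  apply: eq_bigr => k _; rewrite -mulr_sumr; congr (_ * _).
  under eq_bigr do rewrite mulr_suml.
  by rewrite exchange_big.
by rewrite exchange_big.
Qed.

Lemma cI_ge k l : (n + n <= cI k l)%N.
Proof. by rewrite /c_idx -addnA leq_addr. Qed.

Lemma cI_lt k l : (1 <= l <= alpha)%N -> (cI k l < D)%N.
Proof.
case/andP => l1 la; rewrite /c_idx -addnA ltn_add2l.
have : (k.+1 * alpha <= m * alpha)%N by rewrite leq_mul2r ltn_ord orbT.
rewrite mulSn => H; apply: leq_trans H.
rewrite addnC ltn_add2r; case: l l1 la => //= l _; lia.
Qed.

Lemma cI_inj k l k' l' : (1 <= l <= alpha)%N -> (1 <= l' <= alpha)%N ->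
  cI k l = cI k' l' -> k = k' /\ l = l'.
Proof.
move=> /andP[l1 la] /andP[l1' la']; rewrite /c_idx => /eqP; rewrite -!addnA !eqn_add2l => /eqP E.
have a0 : (0 < alpha)%N by apply: leq_trans la.
have lt1 : (l.-1 < alpha)%N by lia.
have lt2 : (l'.-1 < alpha)%N by lia.
have Ed := congr1 (fun x => (x %/ alpha)%N) E.
have Em := congr1 (fun x => (x %% alpha)%N) E.
rewrite /= !divnMDl // !divn_small // !addn0 in Ed.
rewrite /= !modnMDl !modn_small // in Em.
split; first exact: val_inj.
by rewrite -(prednK l1) -(prednK l1') Em.
Qed.


Lemma Aop_dir0 p i x j : M p -> (i < n)%N -> (x = i \/ x = muI i) -> (j < n)%N -> j != i ->
  Aop p (fun k r => pd (h k r) x p) j = 0.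
Proof.
move=> Mp i_n hx jn /eqP ji.
have xlt : (x < n + n)%N by case: hx => ->; rewrite /mu_idx; lia.
have H := @eqder p (ev x) j Mp jn.
rewrite big1 ?add0r in H; first apply: H.
- rewrite crd_ev (_ : (x == j) = false) //; apply/negbTE/eqP.
  by case: hx => -> ; rewrite /mu_idx; lia.
- rewrite crd_ev (_ : (x == muI j) = false) //; apply/negbTE/eqP.
  by case: hx => -> ; rewrite /mu_idx; lia.
move=> k _; rewrite big1 ?mulr0 // => l _.
rewrite crd_ev (_ : (x == cI k l) = false) ?mul0r //; apply/negbTE/eqP.
by have := cI_ge k l; lia.
Qed.

Lemma Aop_dirc p k' l j : M p -> (1 <= l <= alpha)%N -> (j < n)%N ->
  Aop p (fun k r => pd (h k r) (cI k' l) p) j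
   = - (phi k' (crd j p, crd (muI j) p) * crd j p ^+ ((nk k').-1 + l)).
Proof.
move=> Mp lr jn.
have xge := cI_ge k' l.
have X1 : crd j (ev (cI k' l)) = 0.
  rewrite crd_ev (_ : (cI k' l == j) = false) //; apply/negbTE/eqP; lia.
have X2 : crd (muI j) (ev (cI k' l)) = 0.
  rewrite crd_ev (_ : (cI k' l == muI j) = false) //; apply/negbTE/eqP.
  by rewrite /mu_idx; lia.
have H := @eqder p (ev (cI k' l)) j Mp jn X1 X2.
rewrite (bigD1 k') //= [X in _ + X + _]big1 ?addr0 in H; last first.
  move=> k kk'; rewrite big_nat_cond big1 ?mulr0 // => l0 /andP[/andP[l01 l0a] _].
  rewrite crd_ev (_ : (cI k' l == cI k l0) = false) ?mul0r //; apply/negbTE/eqP.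
  move=> E; have l0r : (0 < l0 <= alpha)%N by rewrite l01.
  have [E1 _] := cI_inj lr l0r E.
  by move/eqP: kk'; rewrite E1.
rewrite (bigD1_seq l) /= in H; first last.
- exact: iota_uniq.
- by rewrite mem_index_iota; lia.
rewrite big_nat_cond big1 ?addr0 in H; last first.
  move=> l0 /andP[/andP[l01 l0a] l0l].
  rewrite crd_ev (_ : (cI k' l == cI k' l0) = false) ?mul0r //; apply/negbTE/eqP.
  move=> E; have l0r : (0 < l0 <= alpha)%N by rewrite l01.
  have [_ E2] := cI_inj lr l0r E.
  by move/eqP: l0l; rewrite E2.
rewrite crd_ev eqxx cI_lt // mul1r in H.
by apply/eqP; rewrite -addr_eq0 addrC H.
Qed.


Hypothesis Hnk : forall k, (alpha <= nk k)%N.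
Hypothesis Hpos : forall k, (0 < nk k)%N.

Lemma AopD q a b j : Aop q (fun k i => a k i + b k i) j = Aop q a j + Aop q b j.
Proof.
rewrite /Aop -big_split /=; apply: eq_bigr => k _; rewrite -mulrDr -big_split /=.
by congr (_ * _); apply: eq_bigr => i _; rewrite mulrDl.
Qed.

Lemma AopZr q c a j : Aop q (fun k i => a k i * c) j = c * Aop q a j.
Proof. rewrite -AopZ; congr Aop; apply: funext => k; apply: funext => i; exact: mulrC. Qed.

Lemma Zrel p i x s : M p -> (i < n)%N -> (x = i \/ x = muI i) -> (s <= alpha)%N ->
  forall k t, (1 <= t <= nk k)%N ->
  (if (t + s <= nk k)%N then pd (h k (t + s)) x p else 0) =
   crd i p ^+ s * pd (h k t) x p
   + \sum_(k' < m) \sum_(1 <= r < s.+1) pd (h k t) (cI k' (s - r + 1)) p * pd (h k' r) x p.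
Proof.
move=> Mp i_n hx sa.
pose w := fun k r => pd (h k r) x p.
pose z := fun k t => (if (t + s <= nk k)%N then w k (t + s) else 0)
  - (crd i p ^+ s * w k t + \sum_(k' < m) \sum_(1 <= r < s.+1)
        pd (h k t) (cI k' (s - r + 1)) p * w k' r).
suff Z : forall k t, (1 <= t <= nk k)%N -> z k t = 0.
  by move=> k t Ht; apply/eqP; rewrite -subr_eq0; apply/eqP; exact: Z.
apply: (Hnd Mp) => j jn.
change (Aop p z j = 0).
pose lam := crd j p.
pose X := \sum_(k < m) phi k (crd j p, crd (muI j) p) *
   \sum_(1 <= r < s.+1) w k r * lam ^+ ((nk k).-1 + (s - r + 1)).
have EA : Aop p (fun k t => if (t + s <= nk k)%N then w k (t + s) else 0) j
    = lam ^+ s * Aop p w j - X.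
  rewrite /Aop /X mulr_sumr -sumrB; apply: eq_bigr => k _.
  rewrite (shiftA (w k) lam (leq_trans sa (Hnk k)) (Hpos k)).
  by rewrite mulrBr mulrCA.
have EC : Aop p (fun k t => \sum_(k' < m) \sum_(1 <= r < s.+1)
        pd (h k t) (cI k' (s - r + 1)) p * w k' r) j = - X.
  rewrite AopS /X -sumrN; apply: eq_bigr => k' _.
  rewrite AopS mulr_sumr -sumrN; apply: eq_big_nat => r Hr.
  rewrite AopZr Aop_dirc //; last lia.
  by rewrite mulrN mulrCA.
rewrite /z AopB AopD AopZ EA EC.
have [eji | nji] := eqVneq j i.
  rewrite /lam eji; ring.
rewrite (@Aop_dir0 p i x j) //; ring.
Qed.


Local Notation dfv := (@dfv R n m alpha).

Lemma dfvD f p (u w : pt) : dfv f p (u + w) = dfv f p u + dfv f p w.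
Proof. by rewrite /Defs.dfv -big_split; apply: eq_bigr => e _; rewrite mxE mulrDl. Qed.

Lemma dfv0 f p : dfv f p 0 = 0.
Proof. by rewrite /Defs.dfv big1 // => e _; rewrite mxE mul0r. Qed.

Lemma dfvZ f p c (u : pt) : dfv f p (c *: u) = c * dfv f p u.
Proof. by rewrite /Defs.dfv mulr_sumr; apply: eq_bigr => e _; rewrite mxE mulrA. Qed.

Lemma dfvN f p (u : pt) : dfv f p (- u) = - dfv f p u.
Proof. by rewrite -scaleN1r dfvZ mulN1r. Qed.

Lemma dfv_ev f p x : (x < D)%N -> dfv f p (ev x) = pd f x p.
Proof.
move=> xD; rewrite /Defs.dfv (bigD1 (Ordinal xD)) //= big1 ?addr0.
  by rewrite mxE eqxx mul1r.
move=> e ne; rewrite mxE; case: eqP => [E|]; last by rewrite mul0r.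
by move: ne; rewrite -val_eqE /= E eqxx.
Qed.

Lemma dfv_pi f p (a b : nat -> R) :
  dfv f p (\sum_(i < n) (a i *: ev i - b i *: ev (muI i)))
  = \sum_(i < n) (a i * pd f i p - b i * pd f (muI i) p).
Proof.
rewrite (big_morph (dfv f p) (dfvD f p) (dfv0 f p)); apply: eq_bigr => i _.
rewrite dfvD dfvN !dfvZ !dfv_ev //; have := ltn_ord i; rewrite /mu_idx; lia.
Qed.

Lemma comm_core p i : M p -> (i < n)%N ->
  forall k t k' r, (1 <= t <= nk k)%N -> (1 <= r <= nk k')%N ->
  pd (h k' r) (muI i) p * pd (h k t) i p - pd (h k' r) i p * pd (h k t) (muI i) p = 0.
Proof.
move=> Mp i_n k t k' r Ht Hr.
pose vl := fun k r => pd (h k r) i p.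
pose vm := fun k r => pd (h k r) (muI i) p.
have Zl : forall j, (j < n)%N -> j != i -> Aop p vl j = 0.
  by move=> j jn ji; apply: (@Aop_dir0 p i i j) => //; left.
have Zm : forall j, (j < n)%N -> j != i -> Aop p vm j = 0.
  by move=> j jn ji; apply: (@Aop_dir0 p i (muI i) j) => //; right.
have [a0 | an0] := eqVneq (Aop p vl i) 0.
  have V : forall k t, (1 <= t <= nk k)%N -> vl k t = 0.
    apply: (Hnd Mp) => j jn; change (Aop p vl j = 0).
    by have [-> //|] := eqVneq j i; exact: Zl.
  by rewrite -/(vl k t) -/(vl k' r) !V // mulr0 mul0r subrr.
pose wv := fun k r => Aop p vm i * vl k r - Aop p vl i * vm k r.
have W : forall k t, (1 <= t <= nk k)%N -> wv k t = 0.
  apply: (Hnd Mp) => j jn; change (Aop p wv j = 0).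
  rewrite /wv AopB !AopZ.
  have [-> |ji] := eqVneq j i; first by rewrite mulrC subrr.
  by rewrite (Zl j jn ji) (Zm j jn ji) !mulr0 subrr.
have E : forall k t, (1 <= t <= nk k)%N -> vm k t = Aop p vm i / Aop p vl i * vl k t.
  move=> k0 t0 H0; have := W k0 t0 H0; rewrite /wv => /eqP; rewrite subr_eq0 => /eqP E0.
  by rewrite mulrAC E0 mulrAC mulfV // mul1r.
rewrite -/(vl k t) -/(vl k' r) -/(vm k t) -/(vm k' r) (E k t) // (E k' r) //.
by rewrite -mulrA mulrCA subrr.
Qed.

Lemma comm p k t k' r : M p -> (1 <= t <= nk k)%N -> (1 <= r <= nk k')%N ->
  dfv (h k t) p (@Xf R n m alpha h k' r p) = 0.
Proof.
move=> Mp Ht Hr; rewrite /Xf /pi0 (dfv_pi _ _ (fun i => pd (h k' r) (muI i) p) (fun i => pd (h k' r) i p)) big1 // => i _.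
exact: comm_core.
Qed.


Definition psiv (a b : nat -> R) : pt :=
  \sum_(i < n) (a i *: ev i - b i *: ev (muI i)).

Lemma psiD a b a' b' : psiv a b + psiv a' b' = psiv (fun i => a i + a' i) (fun i => b i + b' i).
Proof.
rewrite /psiv -big_split /=; apply: eq_bigr => i _.
by rewrite !scalerDl opprD addrACA.
Qed.

Lemma psiZ c a b : c *: psiv a b = psiv (fun i => c * a i) (fun i => c * b i).
Proof.
by rewrite /psiv scaler_sumr; apply: eq_bigr => i _; rewrite scalerBr !scalerA.
Qed.

Lemma psiS (T : Type) (r : seq T) (P : pred T) (A B : T -> nat -> R) :
  \sum_(x <- r | P x) psiv (A x) (B x)
  = psiv (fun i => \sum_(x <- r | P x) A x i) (fun i => \sum_(x <- r | P x) B x i).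
Proof.
rewrite /psiv exchange_big /=; apply: eq_bigr => i _.
by rewrite !scaler_suml -sumrB.
Qed.

Lemma psiv_ext a b a' b' : (forall i, (i < n)%N -> a i = a' i) ->
  (forall i, (i < n)%N -> b i = b' i) -> psiv a b = psiv a' b'.
Proof. by move=> Ha Hb; apply: eq_bigr => i _; rewrite Ha ?Hb. Qed.

Lemma psiv0 : psiv (fun _ => 0) (fun _ => 0) = 0.
Proof. by rewrite /psiv big1 // => i _; rewrite !scale0r subrr. Qed.

Lemma Xf_psiv k j p : @Xf R n m alpha h k j p
   = psiv (fun i => pd (h k j) (muI i) p) (fun i => pd (h k j) i p).
Proof. by []. Qed.

Lemma P1 p k s t : M p -> (s <= alpha)%N -> (1 <= t <= nk k)%N ->
  @pis R n m alpha h s (h k t) p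
   = if (t + s <= nk k)%N then @Xf R n m alpha h k (t + s) p else 0.
Proof.
move=> Mp sa Ht.
have -> : (if (t + s <= nk k)%N then @Xf R n m alpha h k (t + s) p else 0)
   = psiv (fun i => if (t + s <= nk k)%N then pd (h k (t + s)) (muI i) p else 0)
          (fun i => if (t + s <= nk k)%N then pd (h k (t + s)) i p else 0).
  by case: ifP => _; [exact: Xf_psiv | rewrite psiv0].
rewrite /pis.
have -> : \sum_(i < n) crd i p ^+ s *: (pd (h k t) (muI i) p *: ev i - pd (h k t) i p *: ev (muI i))
   = psiv (fun i => crd i p ^+ s * pd (h k t) (muI i) p) (fun i => crd i p ^+ s * pd (h k t) i p).
  by apply: eq_bigr => i _; rewrite scalerBr !scalerA.
have -> : \sum_(k' < m) \sum_(1 <= j < s.+1)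
      (pd (h k t) (cI k' (s - j + 1)) p *: @Xf R n m alpha h k' j p
       - dfv (h k t) p (@Xf R n m alpha h k' j p) *: ev (cI k' (s - j + 1)))
   = \sum_(k' < m) \sum_(1 <= j < s.+1)
      psiv (fun i => pd (h k t) (cI k' (s - j + 1)) p * pd (h k' j) (muI i) p)
           (fun i => pd (h k t) (cI k' (s - j + 1)) p * pd (h k' j) i p).
  apply: eq_bigr => k' _; apply: eq_big_nat => j Hj.
  rewrite comm //; last by have := Hnk k'; lia.
  by rewrite scale0r subr0 Xf_psiv psiZ.
under eq_bigr do rewrite psiS.
rewrite psiS psiD; apply: psiv_ext => i Hi.
  by rewrite (@Zrel p i (muI i) s) //; right.
by rewrite (@Zrel p i i s) //; left.
Qed.


Lemma P2 p k l s : (1 <= l <= alpha)%N -> (s <= alpha)%N ->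
  @pis R n m alpha h s (crd (cI k l)) p
   = if (l <= s)%N then @Xf R n m alpha h k (s + 1 - l) p else 0.
Proof.
move=> lr sa; have cge := cI_ge k l.
have F1 : forall i : 'I_n, crd (cI k l) (ev i) = 0.
  move=> i; rewrite crd_ev (_ : ((i : nat) == cI k l) = false) //.
  by apply/negbTE/eqP; have := ltn_ord i; lia.
have F2 : forall i : 'I_n, crd (cI k l) (ev (muI i)) = 0.
  move=> i; rewrite crd_ev (_ : (muI i == cI k l) = false) //.
  by apply/negbTE/eqP; have := ltn_ord i; rewrite /mu_idx; lia.
rewrite /pis big1 ?add0r; last first.
  by move=> i _; rewrite !pd_crd F1 F2 !scale0r subrr scaler0.
have Ed : forall k' j, dfv (crd (cI k l)) p (@Xf R n m alpha h k' j p) = 0.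
  move=> k' j; rewrite Xf_psiv (dfv_pi _ _ (fun i => pd (h k' j) (muI i) p) (fun i => pd (h k' j) i p)).
  by rewrite big1 // => i _; rewrite !pd_crd F1 F2 !mulr0 subrr.
have Ep : forall k' j, (1 <= j <= s)%N ->
    pd (crd (cI k l)) (cI k' (s - j + 1)) p = ((k' == k) && (s - j + 1 == l)%N)%:R.
  move=> k' j Hj; rewrite pd_crd crd_ev cI_lt // andbT.
  have r1 : (1 <= s - j + 1 <= alpha)%N by lia.
  case E: (cI k' (s - j + 1) == cI k l).
    by move/eqP: E => /(cI_inj r1 lr) [-> ->]; rewrite !eqxx.
  case: (eqVneq k' k) => [Ek|] //=; case: (eqVneq (s - j + 1)%N l) => [El|] //.
  by move: E; rewrite Ek El eqxx.
have -> : \sum_(k' < m) \sum_(1 <= j < s.+1)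
      (pd (crd (cI k l)) (cI k' (s - j + 1)) p *: @Xf R n m alpha h k' j p
       - dfv (crd (cI k l)) p (@Xf R n m alpha h k' j p) *: ev (cI k' (s - j + 1)))
   = \sum_(k' < m) \sum_(1 <= j < s.+1)
      ((k' == k) && (s - j + 1 == l)%N)%:R *: @Xf R n m alpha h k' j p.
  apply: eq_bigr => k' _; apply: eq_big_nat => j Hj.
  by rewrite Ed scale0r subr0 Ep //; lia.
rewrite (bigD1 k) //= [X in _ + X = _]big1 ?addr0; last first.
  by move=> k' /negPf nk'; apply: big1 => j _; rewrite nk' /= scale0r.
case: ifP => ls.
  rewrite (bigD1_seq (s + 1 - l)%N) /=; first last.
  - exact: iota_uniq.
  - by rewrite mem_index_iota; lia.
  rewrite big_nat_cond big1 ?addr0.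
    by rewrite eqxx /= (_ : (s - (s + 1 - l) + 1 == l)%N = true) ?scale1r //; apply/eqP; lia.
  move=> j /andP[/andP[j1 js] jne]; rewrite eqxx /=.
  rewrite (_ : (s - j + 1 == l)%N = false) ?scale0r //; apply/negbTE/eqP => E.
  by move/eqP: jne; apply; lia.
rewrite big_nat_cond big1 // => j /andP[/andP[j1 js] _]; rewrite eqxx /=.
rewrite (_ : (s - j + 1 == l)%N = false) ?scale0r //; apply/negbTE/eqP; lia.
Qed.


Lemma Hk_neg k i : @Hk R n m alpha h k (- (i%:Z)) = crd (cI k i.+1).
Proof. by case: i. Qed.

Lemma Hk_diff k a b : @Hk R n m alpha h k (a%:Z - b%:Z)
   = if (b < a)%N then h k (a - b)%N else crd (cI k (b - a).+1).
Proof.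
case: ltnP => ab.
  rewrite (subzn (ltnW ab)).
  have -> : (a - b)%N = (a - b).-1.+1 by lia.
  by [].
by rewrite -opprB (subzn ab) Hk_neg.
Qed.

Lemma final_sec (k : 'I_m) (i j : nat) : (i < j <= alpha)%N ->
  forall p, M p ->
  [/\ @pis R n m alpha h i (@Hk R n m alpha h k (- (i%:Z))) p = 0,
      (forall r, (1 <= r <= nk k)%N ->
         @pis R n m alpha h i (@Hk R n m alpha h k (r%:Z - i%:Z)) p = @Xf R n m alpha h k r p
         /\ @Xf R n m alpha h k r p = @pis R n m alpha h j (@Hk R n m alpha h k (r%:Z - j%:Z)) p)
    & @pis R n m alpha h j (@Hk R n m alpha h k ((nk k)%:Z + 1 - j%:Z)) p = 0].
Proof.
move=> /andP[ij ja] p Mp.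
have ia : (i <= alpha)%N by lia.
have nkk := Hnk k.
have gen : forall s r, (s <= alpha)%N -> (1 <= r <= nk k)%N ->
    @pis R n m alpha h s (@Hk R n m alpha h k (r%:Z - s%:Z)) p = @Xf R n m alpha h k r p.
  move=> s r sa Hr; rewrite Hk_diff; case: ltnP => sr.
    rewrite P1 //; last lia.
    rewrite (_ : (r - s + s)%N = r); last lia.
    rewrite (_ : (r <= nk k)%N = true) //; lia.
  rewrite P2 //; last lia.
  rewrite (_ : ((s - r).+1 <= s)%N = true); last lia.
  rewrite (_ : (s + 1 - (s - r).+1)%N = r) //; lia.
split.
- rewrite Hk_neg P2 //; last lia.
  rewrite (_ : (i.+1 <= i)%N = false) //; lia.
- by move=> r Hr; split; [exact: gen | symmetry; exact: gen].
have -> : ((nk k)%:Z + 1 - j%:Z) = ((nk k).+1%:Z - j%:Z) by rewrite -addn1 PoszD.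
rewrite Hk_diff (_ : (j < (nk k).+1)%N = true); last lia.
rewrite P1 //; last lia.
rewrite (_ : ((nk k).+1 - j + j <= nk k)%N = false) //; lia.
Qed.

End Main.



Theorem corollary14 (R : realType) (n m alpha : nat) (nk : 'I_m -> nat)
  (phi0 : R * R -> R) (phi : 'I_m -> R * R -> R) (U : set (R * R))
  (M : set 'rV[R]_(n + n + m * alpha))
  (h : 'I_m -> nat -> 'rV[R]_(n + n + m * alpha) -> R) :
  (0 < n)%N -> (0 < m)%N -> (forall k, 0 < nk k)%N ->
  (\sum_(k < m) nk k)%N = n ->
  (1 <= alpha)%N -> (forall k, alpha <= nk k)%N ->
  open U -> smooth_on U phi0 -> (forall k, smooth_on U (phi k)) ->
  (forall k : 'I_m, k.+1 = m -> forall x, phi k x = 1) ->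
  open M ->
  (forall p, M p -> forall j, (j < n)%N ->
       U (@crd R n m alpha j p, @crd R n m alpha (mu_idx n j) p)) ->
  (forall p, M p -> forall j, (j < n)%N -> @curve_eq R n m alpha nk phi0 phi h p j) ->
  (forall p, M p -> @nondeg_system R n m alpha nk phi p) ->
  forall (k : 'I_m) (i j : nat), (i < j <= alpha)%N ->
  forall p, M p ->
  [/\ @pis R n m alpha h i (@Hk R n m alpha h k (- (i%:Z))) p = 0,
      (forall r, (1 <= r <= nk k)%N ->
         @pis R n m alpha h i (@Hk R n m alpha h k (r%:Z - i%:Z)) p = @Xf R n m alpha h k r p
         /\ @Xf R n m alpha h k r p = @pis R n m alpha h j (@Hk R n m alpha h k (r%:Z - j%:Z)) p)
    & @pis R n m alpha h j (@Hk R n m alpha h k ((nk k)%:Z + 1 - j%:Z)) p = 0].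
Proof.
move=> n0 m0 nkpos Hsum a1 Hnk oU sphi0 sphi lastphi oM HU Hcurve Hnd k i j ij p Mp.
apply: (final_sec Hsum _ _ HU Hcurve Hnd oM Hnk nkpos k ij Mp).
- by move=> k' x Ux; exact: ((sphi k' 1%N).1 x Ux).
- by move=> x Ux; exact: ((sphi0 1%N).1 x Ux).
Qed.
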